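(* Let $K$ be a ramified quadratic extension of $\mathbb{Q}_2$, $d=2m$ with $m$ odd, $m\ge3$, and $f=a_1x_1^d+\dots+a_sx_s^d$ with all $a_i\in\mathcal{O}\setminus\{0\}$. Suppose $f$ has six distinct variables at a common level that can be split into three disjoint pairs, each pair consisting of two variables with the same $\pi$-coefficient. Then $f$ has a nontrivial zero in $K$. In particular, if $f$ has seven variables at the same level, then $f$ has a nontrivial zero in $K$.
   Context: $\mathcal{O}$ is the ring of integers of $K$ and $\pi$ the uniformizer: $\pi=\sqrt{2},\sqrt{-2},\sqrt{10},\sqrt{-10},1+\sqrt{-1},1+\sqrt{-5}$ for $K=\mathbb{Q}_2(\sqrt2),\mathbb{Q}_2(\sqrt{-2}),\mathbb{Q}_2(\sqrt{10}),\mathbb{Q}_2(\sqrt{-10}),\mathbb{Q}_2(\sqrt{-1}),\mathbb{Q}_2(\sqrt{-5})$ respectively. Each unit $u$ has a unique expansion $u=c_0+c_1\pi+c_2\pi^2+\cdots$ with $c_j\in\{0,1\}$, $c_0=1$. Writing $a_i=\pi^r u$ with $u$ a unit, the variable $x_i$ is at level $r\bmod d$ (levels are residues modulo $d$), and its $\pi$-coefficient is $c_1$ of $u$. A nontrivial zero is a point of $K^s$, not all coordinates zero, where $f$ vanishes. *)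

(* Defs.v *)
From HB Require Import structures.
From mathcomp Require Import all_boot all_order all_algebra.
Set Implicit Arguments. Unset Strict Implicit. Unset Printing Implicit Defensive.
Import GRing.Theory Num.Theory.
Local Open Scope ring_scope.

(* K = Q_2(sqrt D) for D in {2,-2,10,-10,-1,-5}.  In all six cases
   O = Z_2[sqrt D] = Z_2 + Z_2 sqrt D (D is not 1 mod 4).
   Elements of Z[sqrt D] are pairs (p,q) meaning p + q sqrt D. *)
Definition zsq := (int * int)%type.
Definition zadd (x y : zsq) : zsq := (x.1 + y.1, x.2 + y.2).
Definition zmul (D : int) (x y : zsq) : zsq :=
  (x.1 * y.1 + D * x.2 * y.2, x.1 * y.2 + x.2 * y.1).
Definition zone : zsq := (1, 0).
Definition zzero : zsq := (0, 0).
Fixpoint zexp (D : int) (x : zsq) (r : nat) : zsq :=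
  match r with 0%N => zone | r'.+1 => zmul D x (zexp D x r') end.

(* congruence modulo 2^n O = 2^n Z + 2^n Z sqrt D *)
Definition zcong (n : nat) (x y : zsq) : bool :=
  ((2 ^+ n)%R %| x.1 - y.1)%Z && ((2 ^+ n)%R %| x.2 - y.2)%Z.

(* O = inverse limit of Z[sqrt D]/2^n : compatible sequences of approximants *)
Definition compat (x : nat -> zsq) := forall n : nat, zcong n (x n) (x n.+1).
Record Oelt := { app :> nat -> zsq; app_compat : compat app }.

(* equality in O (ring operations are computed on approximants) *)
Definition Oeq (x y : nat -> zsq) := forall n : nat, zcong n (x n) (y n).
Definition Ononzero (x : Oelt) := ~ Oeq x (fun _ => zzero).

Definition ramD : seq int := [:: 2; -2; 10; -10; -1; -5].
Definition unif (D : int) : zsq :=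
  if (D == -1) || (D == -5) then (1, 1) else (0, 1).

(* a = pi^r u with u = 1 + c pi + pi^2 w (w in O), r mod d = l :
   the variable with coefficient a is at level l with pi-coefficient c *)
Definition level_coef (D : int) (d : nat) (a : Oelt) (l : nat) (c : bool) :=
  exists (r : nat) (w : Oelt), (r %% d)%N = l /\
    Oeq a (fun n => zmul D (zexp D (unif D) r)
              (zadd (zadd zone (if c then unif D else zzero))
                    (zmul D (zexp D (unif D) 2) (w n)))).

Definition at_level (D : int) (d : nat) (a : Oelt) (l : nat) :=
  exists c : bool, level_coef D d a l c.

Definition formval (D : int) (d s : nat) (a x : 'I_s -> Oelt) (n : nat) : zsq :=
  \big[zadd/zzero]_(i < s) zmul D (a i n) (zexp D (x i n) d).

(* nontrivial zero (in O^s; equivalent to K^s by homogeneity) *)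
Definition nontriv_zero (D : int) (d s : nat) (a : 'I_s -> Oelt) :=
  exists x : 'I_s -> Oelt,
    (exists i, Ononzero (x i)) /\ Oeq (formval D d a x) (fun _ => zzero).

(* Main.v *)
Require Import Defs.
From HB Require Import structures.
From mathcomp Require Import all_boot all_order all_algebra.
From mathcomp Require Import ring zify.
Set Implicit Arguments. Unset Strict Implicit. Unset Printing Implicit Defensive.
Import GRing.Theory Num.Theory.
Local Open Scope ring_scope.

Definition zs (D : int) : Type := zsq.
HB.instance Definition _ D := Choice.on (zs D).
Definition zopp (x : zsq) : zsq := (- x.1, - x.2).

Section ZS.
Variable D : int.
Lemma zaddA' : associative (zadd : zs D -> zs D -> zs D).
Proof. by move=> [? ?] [? ?] [? ?]; rewrite /zadd /=; congr pair; ring. Qed.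
Lemma zaddC' : commutative (zadd : zs D -> zs D -> zs D).
Proof. by move=> [? ?] [? ?]; rewrite /zadd /=; congr pair; ring. Qed.
Lemma zadd0' : left_id (zzero : zs D) zadd.
Proof. by move=> [? ?]; rewrite /zadd /=; congr pair; ring. Qed.
Lemma zaddN' : left_inverse (zzero : zs D) zopp zadd.
Proof. by move=> [? ?]; rewrite /zadd /=; congr pair; ring. Qed.
HB.instance Definition _ := GRing.isZmodule.Build (zs D) zaddA' zaddC' zadd0' zaddN'.
Lemma zmulA' : associative (zmul D : zs D -> zs D -> zs D).
Proof. by move=> [? ?] [? ?] [? ?]; rewrite /zmul /=; congr pair; ring. Qed.
Lemma zmulC' : commutative (zmul D : zs D -> zs D -> zs D).
Proof. by move=> [? ?] [? ?]; rewrite /zmul /=; congr pair; ring. Qed.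
Lemma zmul1' : left_id (zone : zs D) (zmul D).
Proof. by move=> [? ?]; rewrite /zmul /=; congr pair; ring. Qed.
Lemma zmulD' : left_distributive (zmul D : zs D -> zs D -> zs D) zadd.
Proof. by move=> [? ?] [? ?] [? ?]; rewrite /zmul /zadd /=; congr pair; ring. Qed.
Lemma zone0' : (zone : zs D) != zzero. Proof. by []. Qed.
HB.instance Definition _ := GRing.Zmodule_isComNzRing.Build (zs D) zmulA' zmulC' zmul1' zmulD' zone0'.
End ZS.

Lemma zaddE D (x y : zs D) : zadd x y = x + y. Proof. by []. Qed.
Lemma zmulE D (x y : zs D) : zmul D x y = x * y. Proof. by []. Qed.
Lemma zexpE D (x : zs D) n : zexp D x n = x ^+ n.
Proof. elim: n => [|n IH] //=. by rewrite exprS -IH. Qed.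

Goal forall D (x y : zs D), (x + y) ^+ 2 = x ^+ 2 + 2 * x * y + y ^+ 2.
Proof. move=> D x y. ring. Qed.
Lemma zsaddE D (x y : zs D) : x + y = (x.1 + y.1, x.2 + y.2) :> zsq. Proof. by []. Qed.
Lemma zsmulE D (x y : zs D) : x * y = (x.1 * y.1 + D * x.2 * y.2, x.1 * y.2 + x.2 * y.1) :> zsq. Proof. by []. Qed.
Lemma zs1E D : (1 : zs D) = (1%Z, 0%Z) :> zsq. Proof. by []. Qed.
Lemma zs0E D : (0 : zs D) = (0%Z, 0%Z) :> zsq. Proof. by []. Qed.
Lemma zsoppE D (x : zs D) : - x = (- x.1, - x.2) :> zsq. Proof. by []. Qed.
Definition zc (D : int) (n : nat) (x y : zs D) := zcong n x y.
Arguments zc : clear implicits.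


Section Cong.
Variable D : int.
Implicit Types x y z q : zs D.

Lemma pow2E n : ((2 : zs D) ^+ n) = ((2 ^+ n : int), 0%Z) :> zsq.
Proof.
elim: n => [|n IH] //. rewrite exprS IH.
rewrite zsmulE /=. congr pair; rewrite ?exprS; ring.
Qed.

Lemma mulcE (c : int) q : ((c, 0%Z) : zs D) * q = (c * q.1, c * q.2) :> zsq.
Proof. case: q => a b. rewrite zsmulE /=. congr pair; ring. Qed.

Lemma zcongP n x y : reflect (exists q : zs D, x = y + 2 ^+ n * q) (zc D n x y).
Proof.
apply: (iffP andP).
  case=> /dvdzP [q1 H1] /dvdzP [q2 H2]. exists (q1, q2).
  rewrite -[_ * _]/(_ : zsq) pow2E mulcE /=.
  case: x y H1 H2 => [x1 x2] [y1 y2] /= H1 H2.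
  rewrite zsaddE /=. congr pair.
    by rewrite mulrC -H1; ring.
  by rewrite mulrC -H2; ring.
case=> q ->. rewrite -[_ * _]/(_ : zsq) pow2E mulcE.
case: y q => [y1 y2] [q1 q2]. rewrite zsaddE /=.
split; apply/dvdzP; [exists q1|exists q2]; ring.
Qed.

Lemma zcong_refl n x : zc D n x x.
Proof. apply/zcongP; exists 0; ring. Qed.
Lemma zcong_sym n x y : zc D n x y -> zc D n y x.
Proof. move/zcongP=> [q ->]; apply/zcongP; exists (- q); ring. Qed.
Lemma zcong_trans n x y z : zc D n x y -> zc D n y z -> zc D n x z.
Proof. move/zcongP=> [q ->] /zcongP [q' ->]; apply/zcongP; exists (q + q'); ring. Qed.
Lemma zcongD n x y x' y' : zc D n x x' -> zc D n y y' -> zc D n (x + y) (x' + y').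
Proof. move/zcongP=> [q ->] /zcongP [q' ->]; apply/zcongP; exists (q + q'); ring. Qed.
Lemma zcongN n x x' : zc D n x x' -> zc D n (- x) (- x').
Proof. move/zcongP=> [q ->]; apply/zcongP; exists (- q); ring. Qed.
Lemma zcongM n x y x' y' : zc D n x x' -> zc D n y y' -> zc D n (x * y) (x' * y').
Proof. move/zcongP=> [q ->] /zcongP [q' ->]; apply/zcongP.
exists (q * y' + x' * q' + 2 ^+ n * q * q'); ring. Qed.
Lemma zcongX n x x' k : zc D n x x' -> zc D n (x ^+ k) (x' ^+ k).
Proof. move=> H; elim: k => [|k IH]; first exact: zcong_refl.
by rewrite !exprS; apply: zcongM. Qed.
Lemma zcong_le m n x y : (m <= n)%N -> zc D n x y -> zc D m x y.
Proof. move=> le /zcongP [q ->]; apply/zcongP; exists (2 ^+ (n - m) * q).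
by rewrite mulrA -exprD subnKC. Qed.
Lemma zcong_mul2 n q : zc D n (2 ^+ n * q) 0.
Proof. apply/zcongP; exists q; ring. Qed.
Lemma zcong0 x y : zc D 0 x y.
Proof. apply/zcongP; exists (x - y); ring. Qed.
Lemma zcong_subr n x y : zc D n x y = zc D n (x - y) 0.
Proof. apply/idP/idP => /zcongP [q E]; apply/zcongP; exists q.
  by rewrite E; ring. by rewrite -[x](subrK y) E; ring. Qed.

Lemma zcong_cancel h x : zc D h.+1 (2 ^+ h * x) 0 -> zc D 1 x 0.
Proof.
move/andP; rewrite -[_ * _]/(_ : zsq) pow2E mulcE /= !subr0 exprS => [[H1 H2]].
have nz : (2 ^+ h : int) != 0 by rewrite expf_neq0.
rewrite /zc /zcong /= !subr0 expr1.
by rewrite -(@dvdz_mul2l (2 ^+ h) _ _ nz) [2 ^+ h * 2]mulrC H1 -(@dvdz_mul2l (2 ^+ h) _ _ nz) [2 ^+ h * 2]mulrC H2.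
Qed.

End Cong.


Section Hensel.
Variable D : int.
Implicit Types x y z q w e g h : zs D.

Definition zu x := zc D 1 (x * x) 1.

Lemma zuM x y : zu x -> zu y -> zu (x * y).
Proof. move=> hx hy; rewrite /zu.
have -> : x * y * (x * y) = (x * x) * (y * y) by ring.
apply: zcong_trans (zcongM hx hy) _; rewrite mulr1; exact: zcong_refl. Qed.

Lemma zuX x k : zu x -> zu (x ^+ k).
Proof. move=> hx; elim: k => [|k IH]; first by rewrite /zu expr0 mulr1; exact: zcong_refl.
by rewrite exprS; apply: zuM. Qed.

Lemma zu_cong x y : zc D 1 x y -> zu x -> zu y.
Proof. move=> h hx; rewrite /zu; apply: zcong_trans hx.
by apply: zcong_sym; apply: zcongM. Qed.

Lemma zu_nat m : odd m -> zu (m%:R).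
Proof.
move=> om; rewrite -(odd_double_half m) om /= /zu; apply/zcongP.
set k := m./2. exists (2 * (k%:R ^+ 2) + 2 * k%:R).
rewrite -addnn !natrD; ring.
Qed.

Lemma zu_sq w e : zu w -> zc D 1 (e * (1 - w * w)) 0.
Proof. move/zcong_sym/zcongP => [q Hq]. apply/zcongP; exists (e * q).
rewrite {1}Hq; ring. Qed.

Lemma zu_not0 x : zu x -> zc D 1 x 0 -> False.
Proof. move=> hx h0.
have : zc D 1 (1 : zs D) 0.
  apply: zcong_trans (zcong_sym hx) _.
  by rewrite -(mulr0 (0 : zs D)); apply: zcongM.
by []. Qed.

Lemma binom x h N : exists q, (x + h) ^+ N = x ^+ N + N%:R * x ^+ N.-1 * h + h ^+ 2 * q.
Proof.
elim: N => [|N [q IH]]; first by exists 0; rewrite /=; ring.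
case: N IH => [|N] IH.
  by exists 0; rewrite /=; ring.
exists (x * q + N.+1%:R * x ^+ N + h * q).
rewrite exprS IH /= [x ^+ N.+2]exprS [x ^+ N.+1]exprS -[N.+2]addn1 natrD.
ring.
Qed.

Definition zdiv (k : nat) (x : zs D) : zs D := ((x.1 %/ 2 ^+ k)%Z, (x.2 %/ 2 ^+ k)%Z).

Lemma zdivK k x : zc D k x 0 -> x = 2 ^+ k * zdiv k x.
Proof.
move/andP; rewrite !subr0 => [[h1 h2]].
apply/esym. rewrite -[_ * _]/(_ : zsq) pow2E mulcE /=.
case: x h1 h2 => a b /= h1 h2.
by rewrite mulrC divzK // mulrC divzK.
Qed.

Lemma compat_le (A : nat -> zs D) n k : compat A -> (n <= k)%N -> zc D n (A n) (A k).
Proof.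
move=> cA; elim: k => [|k IH]; first by rewrite leqn0 => /eqP ->; exact: zcong_refl.
rewrite leq_eqVlt => /orP [/eqP -> | lt]; first exact: zcong_refl.
apply: zcong_trans (IH lt) _. apply: zcong_le (cA k). exact: lt.
Qed.

Variables (m : nat) (A B : nat -> zs D) (z0 : zs D).
Hypotheses (om : odd m) (cA : compat A) (cB : compat B) (uA : zu (A 3)) (uz : zu z0).
Definition F K y := A K * y ^+ (2 * m) + B K.
Hypothesis (H3 : zc D 3 (F 3 z0) 0).

Lemma F_cong n k y : (n <= k)%N -> zc D n (F k y) (F n y).
Proof. move=> le; apply: zcongD; [apply: zcongM; last exact: zcong_refl|];
 apply: zcong_sym; exact: compat_le. Qed.

Definition step k y :=
  let e := zdiv (k + 3) (F (k + 4) y) in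
  let w := A (k + 4) * m%:R * y ^+ (2 * m).-1 in
  y + 2 ^+ (k + 2) * (- (e * w)).

Lemma step_ok k y : zc D (k + 3) (F (k + 3) y) 0 -> zu y ->
  zc D (k + 4) (F (k + 4) (step k y)) 0 /\ zc D (k + 2) (step k y) y.
Proof.
move=> Hy uy. split; last first.
  rewrite /step /=; apply/zcongP; eexists; reflexivity.
have HE : zc D (k + 3) (F (k + 4) y) 0.
  apply: zcong_trans Hy. apply: F_cong. by rewrite leq_add2l.
set e := zdiv (k + 3) (F (k + 4) y).
set w := A (k + 4) * m%:R * y ^+ (2 * m).-1.
have uw : zu w.
  apply: zuM; [apply: zuM|]; last exact: zuX.
    apply: zu_cong uA. apply: zcong_le (compat_le cA _) => //. by rewrite addn4.
  exact: zu_nat.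
have [g Hg] : exists g, e * (1 - w * w) = 2 * g.
  have /zcongP [g Hg] := zu_sq e uw. by exists g; rewrite Hg add0r expr1.
have HEe := zdivK HE. rewrite -/e in HEe.
have [q Hq] := binom y (2 ^+ (k + 2) * (- (e * w))) (2 * m).
apply/zcongP; exists (g + 2 ^+ k * (A (k + 4) * (e * w) ^+ 2 * q)).
rewrite /step -/e -/w /F Hq.
move: HEe; rewrite /F => HEe.
have -> : B (k + 4) = 2 ^+ (k + 3) * e - A (k + 4) * y ^+ (2 * m) by rewrite -HEe; ring.
have key : forall L R : zs D, L - R = 2 ^+ (k + 3) * (e * (1 - w * w) - 2 * g) -> L = R.
  by move=> L R; rewrite Hg subrr mulr0 => /eqP; rewrite subr_eq0 => /eqP.
apply: key.
rewrite /w natrM !exprD. ring.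
Qed.

Fixpoint Yseq k := if k is k'.+1 then step k' (Yseq k') else z0.

Lemma Y_inv k : zc D (k + 3) (F (k + 3) (Yseq k)) 0 /\ zc D 1 (Yseq k) z0.
Proof.
elim: k => [|k [IH1 IH2]]; first by split => //; exact: zcong_refl.
have uy : zu (Yseq k) by apply: zu_cong (zcong_sym IH2) uz.
have [S1 S2] := step_ok IH1 uy.
split; first by rewrite /= addSn -addnS.
apply: zcong_trans IH2. apply: zcong_le S2. by rewrite addn2.
Qed.

Lemma Y_compat : compat Yseq.
Proof. move=> n /=. have uy : zu (Yseq n) by apply: zu_cong (zcong_sym (Y_inv n).2) uz.
have [_ S2] := step_ok (Y_inv n).1 uy.
apply: zcong_sym; apply: zcong_le S2. by rewrite leq_addr. Qed.

Lemma hensel : exists y : Oelt, (forall n, zc D 1 (y n) z0) /\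
   forall n, zc D n (F n (y n)) 0.
Proof.
exists (Build_Oelt Y_compat); split => n /=; first exact: (Y_inv n).2.
apply: zcong_trans (zcong_sym (F_cong _ (leq_addr 3 n))) _.
apply: zcong_le (Y_inv n).1. exact: leq_addr.
Qed.

End Hensel.


Definition all8 : seq int := map Posz (iota 0 8).
Definition all64 : seq zsq := [seq (a, b) | a <- all8, b <- all8].
Definition n8 (x : zsq) : zsq := ((x.1 %% 8)%Z, (x.2 %% 8)%Z).
Fixpoint zexp8 D (t : zsq) (k : nat) : zsq :=
  if k is k'.+1 then n8 (zmul D t (zexp8 D t k')) else zone.
Definition units8 D := [seq x <- all64 | zcong 1 (zmul D x x) zone].
Definition Pw D (m4 : nat) := undup [seq zexp8 D t (2 * m4)%N | t <- units8 D].
Definition cset (l : seq zsq) := [seq s <- all64 | s \in l].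
Definition coset D P u := cset [seq n8 (zmul D u p) | p <- P].
Definition Cl D P := undup [seq coset D P u | u <- units8 D].
Definition sums (A B : seq zsq) := cset [seq n8 (zadd a b) | a <- A, b <- B].
Definition par (A B : seq zsq) := all (fun a => all (fun b => zcong 1 a b) B) A.
Definition Wl D m4 := let P := Pw D m4 in let C := Cl D P in
  undup [seq sums AB.1 AB.2 | AB <- [seq (A, B) | A <- C, B <- C] & par AB.1 AB.2].
Definition SP D m4 u v := sums (coset D (Pw D m4) (n8 u)) (coset D (Pw D m4) (n8 v)).
Definition opts (A : seq zsq) := None :: map Some A.
Definition oval (o : option zsq) := if o is Some s then s else zzero.
Definition good (A B C : seq zsq) :=
  has (fun a => has (fun b => has (fun c =>
     [|| a != None, b != None | c != None] && (n8 (zadd (oval a) (zadd (oval b) (oval c))) == zzero))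
   (opts C)) (opts B)) (opts A).
Definition check D m4 := let W := Wl D m4 in all (fun A => all (fun B => all (good A B) W) W) W.
Definition check8 D := all (fun t => zexp8 D t 8 == zone) (units8 D).


Lemma checkall : all (fun D => check D 1 && check D 3 && check8 D) ramD.
Proof. vm_cast_no_check (erefl true). Qed.

Section Fin.
Variable D : int.
Implicit Types x y z u v : zs D.

Lemma zc3_n8 x : zc D 3 x (n8 x).
Proof.
apply/zcongP; exists ((x.1 %/ 8)%Z, (x.2 %/ 8)%Z).
rewrite -[_ * _]/(_ : zsq) pow2E mulcE.
case: x => a b; rewrite zsaddE /=. congr pair.
  by rewrite [X in X = _](divz_eq a 8) addrC mulrC.
by rewrite [X in X = _](divz_eq b 8) addrC mulrC.
Qed.

Lemma mod8_all8 (a : int) : (a %% 8)%Z \in all8.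
Proof.
have h0 : (0 <= (a %% 8)%Z) by rewrite modz_ge0.
have h8 : ((a %% 8)%Z < 8) by rewrite ltz_pmod.
case: (a %% 8)%Z h0 h8 => // n _ /= hn.
by apply: map_f; rewrite mem_iota.
Qed.

Lemma n8_all64 x : n8 x \in all64.
Proof. by apply/allpairsP; exists ((x.1 %% 8)%Z, (x.2 %% 8)%Z); rewrite !mod8_all8. Qed.

Lemma n8_units x : zu x -> n8 x \in units8 D.
Proof.
move=> ux; rewrite mem_filter n8_all64 andbT.
have : zu (n8 x : zs D) by apply: zu_cong ux; apply: zcong_le (zc3_n8 x).
by [].
Qed.

Lemma units8_zu (t : zsq) : t \in units8 D -> @zu D t.
Proof. by rewrite mem_filter => /andP []. Qed.

Lemma zexp8_cong (t : zs D) k : zc D 3 (t ^+ k) (zexp8 D t k).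
Proof.
elim: k => [|k IH]; first exact: zcong_refl.
rewrite exprS /=. apply: zcong_trans (zc3_n8 _).
exact: zcongM (zcong_refl _ _) IH.
Qed.

Lemma n8_0 x : n8 x = zzero -> zc D 3 x 0.
Proof. by move=> h; have := zc3_n8 x; rewrite h. Qed.

Variable m : nat.
Hypotheses (om : odd m) (m3 : (3 <= m)%N).

Lemma exp_m8 (t : zs D) : t \in units8 D -> check8 D -> zc D 3 (t ^+ (2 * m)) (t ^+ (2 * (m %% 4))).
Proof.
move=> tu /allP /(_ t tu) /eqP h8.
have e8 : zc D 3 (t ^+ 8) 1.
  by have := zexp8_cong t 8; rewrite h8.
rewrite {1}(divn_eq m 4) mulnDr exprD.
rewrite -[X in zc _ _ _ X]mul1r; apply: zcongM; last exact: zcong_refl.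
have -> : (2 * (m %/ 4 * 4) = 8 * (m %/ 4))%N by rewrite mulnCA mulnC.
rewrite exprM.
apply: zcong_trans (zcongX _ e8) _; rewrite expr1n; exact: zcong_refl.
Qed.

Lemma coset_spec m4 (x a : zsq) : a \in coset D (Pw D m4) x ->
  exists2 t, t \in units8 D & a = n8 (zmul D x (zexp8 D t (2 * m4))).
Proof.
rewrite /coset /cset mem_filter => /andP [/mapP [p hp ->] _].
move: hp; rewrite /Pw mem_undup => /mapP [t tu ->]. by exists t.
Qed.

Lemma coset_par m4 (u : zs D) (a : zsq) : a \in coset D (Pw D m4) (n8 u) -> zc D 1 a u.
Proof.
move=> /coset_spec [t tu ->].
apply: zcong_trans (zcong_le _ (zcong_sym (zc3_n8 _))) _ => //.
rewrite zmulE -[X in zc _ _ _ X]mulr1; apply: zcongM.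
  exact: zcong_le (zcong_sym (zc3_n8 _)).
apply: zcong_trans (zcong_le _ (zcong_sym (zexp8_cong _ _))) _ => //.
rewrite mulnC exprM expr2; exact: (zuX _ (units8_zu tu)).
Qed.

Lemma opt_spec m4 u v o : check8 D -> m4 = (m %% 4)%N ->
  o \in opts (SP D m4 u v) ->
  exists z z' : zs D, (o != None -> zu z) /\
     zc D 3 (oval o) (u * z ^+ (2 * m) + v * z' ^+ (2 * m)).
Proof.
move=> c8 em4; rewrite inE => /orP [/eqP -> | ].
  exists 0, 0; split => //=.
  rewrite expr0n muln_eq0 /= (negbTE (lt0n_neq0 (leq_trans _ m3))) // !mulr0 addr0.
  exact: zcong_refl.
move/mapP => [s]; rewrite /SP /sums /cset mem_filter => /andP [/allpairsP [[a b] [ha hb ->]] _] -> /=.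
move: ha hb => /= /coset_spec [t tu ->] /coset_spec [t' tu' ->].
exists t, t'; split; first by move=> _; exact: units8_zu.
apply: zcong_trans (zcong_sym (zc3_n8 _)) _.
rewrite !(@zaddE D).
apply: zcongD; (apply: zcong_trans (zcong_sym (zc3_n8 _)) _; rewrite (@zmulE D); apply: zcongM).
- exact: zcong_sym (zc3_n8 u).
- apply: zcong_trans (zcong_sym (zexp8_cong _ _)) _; rewrite em4.
  exact: zcong_sym (exp_m8 tu c8).
- exact: zcong_sym (zc3_n8 v).
- apply: zcong_trans (zcong_sym (zexp8_cong _ _)) _; rewrite em4.
  exact: zcong_sym (exp_m8 tu' c8).
Qed.

End Fin.

Lemma inWl D m4 (u v : zs D) : zu u -> zu v -> zc D 1 u v ->
  SP D m4 u v \in Wl D m4.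
Proof.
move=> hu hv huv; rewrite /Wl mem_undup.
apply: (map_f (fun AB : seq zsq * seq zsq => sums AB.1 AB.2)
   (x := (coset D (Pw D m4) (n8 u), coset D (Pw D m4) (n8 v)))).
rewrite mem_filter /=; apply/andP; split.
  apply/allP => a ha; apply/allP => b hb.
  have : zc D 1 a b.
    apply: zcong_trans (coset_par ha) _.
    apply: zcong_trans huv _. exact: zcong_sym (coset_par hb).
  by [].
by apply: allpairs_f; rewrite /Cl mem_undup; apply: map_f; apply: n8_units.
Qed.

Lemma mod4_odd m : odd m -> (m %% 4 = 1 \/ m %% 4 = 3)%N.
Proof.
move=> om; have : odd (m %% 4) by rewrite odd_mod.
have : (m %% 4 < 4)%N by rewrite ltn_mod.
by case: (m %% 4)%N => [|[|[|[|]]]] //; auto.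
Qed.

Lemma fin6 D m (u1 u2 u3 u4 u5 u6 : zs D) : D \in ramD -> odd m -> (3 <= m)%N ->
  zu u1 -> zu u2 -> zu u3 -> zu u4 -> zu u5 -> zu u6 ->
  zc D 1 u1 u2 -> zc D 1 u3 u4 -> zc D 1 u5 u6 ->
  exists z1 z2 z3 z4 z5 z6 : zs D,
   (zu z1 \/ zu z3 \/ zu z5) /\
   zc D 3 ((u1 * z1 ^+ (2 * m) + u2 * z2 ^+ (2 * m)) +
           ((u3 * z3 ^+ (2 * m) + u4 * z4 ^+ (2 * m)) +
            (u5 * z5 ^+ (2 * m) + u6 * z6 ^+ (2 * m)))) 0.
Proof.
move=> HD om m3 h1 h2 h3 h4 h5 h6 p12 p34 p56.
have /andP [/andP [ck1 ck3] c8] := allP checkall D HD.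
set m4 := (m %% 4)%N.
have ck : check D m4 by rewrite /m4; case: (mod4_odd om) => ->.
have := allP ck _ (inWl m4 h1 h2 p12) => /allP /(_ _ (inWl m4 h3 h4 p34)) /allP /(_ _ (inWl m4 h5 h6 p56)).
move=> /hasP [a ha] /hasP [b hb] /hasP [c hc] /andP [ne /eqP s0].
have [z1 [z2 [n1 e1]]] := opt_spec m3 c8 (erefl m4) ha.
have [z3 [z4 [n3 e3]]] := opt_spec m3 c8 (erefl m4) hb.
have [z5 [z6 [n5 e5]]] := opt_spec m3 c8 (erefl m4) hc.
exists z1, z2, z3, z4, z5, z6; split.
  by case/or3P: ne => [/n1|/n3|/n5]; auto.
apply: zcong_trans (zcong_sym (zcongD e1 (zcongD e3 e5))) _.
exact: n8_0.
Qed.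


Definition eps (D : int) : zsq := if D == -1 then (0%Z, 1%Z) else if D == -5 then ((-2)%Z, 1%Z) else ((D %/ 2)%Z, 0%Z).

Definition Dfact D := (zexp D (unif D) 2 == zmul D (2%Z, 0%Z) (eps D)) &&
  zcong 1 (zmul D (eps D) (eps D)) zone &&
  zcong 1 (zmul D (zadd zone (unif D)) (zadd zone (unif D))) zone.

Lemma Dfacts : all Dfact ramD.
Proof. by vm_compute. Qed.

Section DF.
Variables (D : int) (HD : D \in ramD).
Definition piu : zs D := unif D.
Definition ep : zs D := eps D.

Lemma pi2 : piu ^+ 2 = 2 * ep.
Proof. have /andP [/andP [/eqP h _] _] := allP Dfacts D HD. by rewrite -zexpE h. Qed.
Lemma zu_ep : zu ep.
Proof. by have /andP [/andP [_ h] _] := allP Dfacts D HD. Qed.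
Lemma zu_1pi : zu (1 + piu).
Proof. by have /andP [_ h] := allP Dfacts D HD. Qed.
Lemma zu_1 : zu (1 : zs D).
Proof. rewrite /zu mulr1; exact: zcong_refl. Qed.

Lemma nonzero (e : nat) (w : nat -> zs D) : (forall n, zu (w n)) ->
  ~ (forall n, zc D n (piu ^+ e * w n) 0).
Proof.
move=> uw H.
have := H e.+1.
move=> /(zcongM (zcong_refl _ (piu ^+ e))); rewrite mulr0 mulrA -exprD addnn -mul2n exprM pi2 exprMn -mulrA.
move/zcong_cancel => h. apply: (zu_not0 _ h). apply: zuM; [exact: zuX zu_ep| exact: uw].
Qed.

End DF.

Lemma reindex_idx (s n : nat) (R : nmodType) (h : 'I_n -> 'I_s) (G : 'I_s -> R) :
  injective h -> (forall i, i \notin codom h -> G i = 0) ->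
  \sum_(i < s) G i = \sum_(k < n) G (h k).
Proof.
move=> ih G0.
rewrite (bigID (mem (codom h))) /= [X in _ + X]big1 ?addr0; last by move=> i; apply: G0.
have uh : uniq (codom h) by rewrite /codom /image_mem map_inj_uniq ?enum_uniq.
rewrite -(big_uniq _ uh) /codom big_image.
by apply: eq_bigl => k.
Qed.

Definition o0 : 'I_6 := @Ordinal 6 0 isT.
Definition o1 : 'I_6 := @Ordinal 6 1 isT.
Definition o2 : 'I_6 := @Ordinal 6 2 isT.
Definition o3 : 'I_6 := @Ordinal 6 3 isT.
Definition o4 : 'I_6 := @Ordinal 6 4 isT.
Definition o5 : 'I_6 := @Ordinal 6 5 isT.

Lemma sum6 (R : nmodType) (G : 'I_6 -> R) :
  \sum_(k < 6) G k = (G o0 + G o1) + ((G o2 + G o3) + (G o4 + G o5)).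
Proof.
rewrite !big_ord_recl big_ord0 addr0 !addrA.
by congr (_ + _ + _ + _ + _ + _); congr G; apply: val_inj.
Qed.


Lemma zero_compat : compat (fun _ => zzero).
Proof. by move=> n; apply: (@zcong_refl 0). Qed.

Lemma lc_data D d (a : Oelt) l c : D \in ramD -> level_coef D d a l c ->
  exists (r : nat) (V : nat -> zs D), (r %% d)%N = l /\ compat V /\
   (forall n, zc D n (a n) (piu D ^+ r * V n)) /\
   (forall n, zc D 1 (V n) (1 + (if c then piu D else 0))).
Proof.
move=> HD [r [w [hl hO]]].
exists r, (fun n => 1 + (if c then piu D else 0) + piu D ^+ 2 * (w n : zs D)).
split => //; split; [|split].
- move=> n /=; apply: zcongD (zcong_refl _ _) _; apply: zcongM (zcong_refl _ _) _.
  exact: app_compat.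
- move=> n; have := hO n; rewrite /zc -!zexpE; exact.
- move=> n; apply/zcongP; exists (ep D * w n); rewrite (pi2 HD); ring.
Qed.

Lemma zu_c D c : D \in ramD -> zu (1 + (if c then piu D else 0)).
Proof. by move=> HD; case: c; [exact: zu_1pi | rewrite addr0; exact: zu_1]. Qed.

Lemma assemble D m s (a : 'I_s -> Oelt) (idx : 'I_6 -> 'I_s) (r : 'I_6 -> nat)
  (V : 'I_6 -> nat -> zs D) l :
 D \in ramD -> odd m -> (3 <= m)%N -> injective idx ->
 (forall k, compat (V k)) -> (forall k, zu (V k 3)) ->
 (forall k, (r k %% (2 * m))%N = l) ->
 (forall k n, zc D n (a (idx k) n) (piu D ^+ r k * V k n)) ->
 zc D 1 (V o0 3) (V o1 3) -> zc D 1 (V o2 3) (V o3 3) -> zc D 1 (V o4 3) (V o5 3) ->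
 nontriv_zero D (2 * m) a.
Proof.
move=> HD om m3 ih cV uV hr ha p01 p23 p45.
have [z1 [z2 [z3 [z4 [z5 [z6 [hu hs]]]]]]] :=
  fin6 HD om m3 (uV o0) (uV o1) (uV o2) (uV o3) (uV o4) (uV o5) p01 p23 p45.
pose Z (k : 'I_6) : zs D := nth 0 [:: z1; z2; z3; z4; z5; z6] k.
have hsum : zc D 3 (\sum_(k < 6) V k 3 * Z k ^+ (2 * m)) 0 by rewrite sum6.
have [j uj] : exists j, zu (Z j) by case: hu => [h|[h|h]]; [exists o0|exists o2|exists o4].
pose A n := V j n.
pose B n := \sum_(k < 6 | k != j) V k n * Z k ^+ (2 * m).
have cB : compat B.
  move=> n; apply: (big_ind2 (fun x y => zc D n x y)).
  - exact: zcong_refl.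
  - by move=> ? ? ? ? h1 h2; apply: zcongD.
  - by move=> k _; apply: zcongM (cV k n) (zcong_refl _ _).
have H3 : zc D 3 (F m A B 3 (Z j)) 0.
  by move: hsum; rewrite (bigD1 j) //=.
have [y [hy1 hy]] := hensel om (cV j) cB (uV j) uj H3.
pose Q := (\sum_(k < 6) (r k %/ (2 * m)))%N.
pose e k := (Q - r k %/ (2 * m))%N.
pose R := (l + Q * (2 * m))%N.
have hR : forall k, (r k + e k * (2 * m) = R)%N.
  move=> k; have hq : (r k %/ (2 * m) <= Q)%N.
    by rewrite /Q (bigD1 k) //= leq_addr.
  rewrite /e /R -(hr k) {1}(divn_eq (r k) (2 * m)) mulnBl.
  move: hq; set q := (r k %/ (2 * m))%N; set t := (r k %% (2 * m))%N => hq.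
  have : (q * (2 * m) <= Q * (2 * m))%N by rewrite leq_mul2r hq orbT.
  lia.
pose W k n := if k == j then (y n : zs D) else Z k.
pose X k n := piu D ^+ e k * W k n.
have cX : forall k, compat (X k).
  move=> k n; apply: zcongM (zcong_refl _ _) _; rewrite /W; case: (k == j).
    exact: app_compat.
  exact: zcong_refl.
pose xf (i : 'I_s) : Oelt :=
  if [pick k | idx k == i] is Some k then Build_Oelt (cX k) else Build_Oelt zero_compat.
have pk : forall k, [pick k' | idx k' == idx k] = Some k.
  move=> k; case: pickP => [k' /eqP /ih -> // | /(_ k)]; by rewrite eqxx.
exists xf; split.
  exists (idx j); rewrite /Ononzero /xf pk /= => H.
  apply: (@nonzero D HD (e j) (fun n => y n)).
    by move=> n; apply: zu_cong (zcong_sym (hy1 n)) uj.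
  by move=> n; have := H n; rewrite /X /W eqxx.
move=> n.
have -> : formval D (2 * m) a xf n = \sum_(i < s) (a i n : zs D) * (xf i n : zs D) ^+ (2 * m).
  by rewrite /formval; apply: eq_bigr => i _; rewrite zexpE.
rewrite (@reindex_idx s 6 _ idx _ ih); last first.
  move=> i ni; rewrite /xf; case: pickP => [k /eqP hk | _].
    by move: ni; rewrite -hk codom_f.
  by rewrite /= expr0n muln_eq0 /= (negbTE (lt0n_neq0 (leq_trans _ m3))) // mulr0.
under eq_bigr => k _ do rewrite /xf pk /=.
apply: (@zcong_trans _ _ _ (\sum_(k < 6) piu D ^+ r k * V k n * X k n ^+ (2 * m))).
  apply: (big_ind2 (fun x y => zc D n x y)).
  - exact: zcong_refl.
  - by move=> ? ? ? ? h1 h2; apply: zcongD.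
  - by move=> k _; apply: zcongM (ha k n) (zcong_refl _ _).
have -> : \sum_(k < 6) piu D ^+ r k * V k n * X k n ^+ (2 * m) =
          piu D ^+ R * (A n * (y n : zs D) ^+ (2 * m) + B n).
  rewrite (bigD1 j) //= mulrDr; congr (_ + _).
    rewrite /X /W eqxx exprMn -exprM -(hR j) exprD /A; ring.
  rewrite /B mulr_sumr; apply: eq_bigr => k kj.
  rewrite /X /W (negbTE kj) exprMn -exprM -(hR k) exprD; ring.
apply: zcong_trans (zcongM (zcong_refl _ (piu D ^+ R)) (hy n)) _.
rewrite mulr0; exact: zcong_refl.
Qed.


Lemma part1 (D : int) (m s : nat) (a : 'I_s -> Oelt) :
  D \in ramD -> odd m -> (3 <= m)%N ->
  (exists (l : nat) (i1 i2 i3 i4 i5 i6 : 'I_s) (c1 c2 c3 : bool),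
      uniq [:: i1; i2; i3; i4; i5; i6] /\
      level_coef D (2 * m)%N (a i1) l c1 /\ level_coef D (2 * m)%N (a i2) l c1 /\
      level_coef D (2 * m)%N (a i3) l c2 /\ level_coef D (2 * m)%N (a i4) l c2 /\
      level_coef D (2 * m)%N (a i5) l c3 /\ level_coef D (2 * m)%N (a i6) l c3) ->
    nontriv_zero D (2 * m)%N a.
Proof.
move=> HD om m3 [l [i1 [i2 [i3 [i4 [i5 [i6 [c1 [c2 [c3 [u [h1 [h2 [h3 [h4 [h5 h6]]]]]]]]]]]]]]]].
have [r1 [V1 [l1 [cV1 [a1 p1]]]]] := lc_data HD h1.
have [r2 [V2 [l2 [cV2 [a2 p2]]]]] := lc_data HD h2.
have [r3 [V3 [l3 [cV3 [a3 p3]]]]] := lc_data HD h3.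
have [r4 [V4 [l4 [cV4 [a4 p4]]]]] := lc_data HD h4.
have [r5 [V5 [l5 [cV5 [a5 p5]]]]] := lc_data HD h5.
have [r6 [V6 [l6 [cV6 [a6 p6]]]]] := lc_data HD h6.
pose idx (k : 'I_6) := nth i1 [:: i1; i2; i3; i4; i5; i6] k.
pose r (k : 'I_6) := nth 0%N [:: r1; r2; r3; r4; r5; r6] k.
pose V (k : 'I_6) := nth (fun _ => 0) [:: V1; V2; V3; V4; V5; V6] k.
pose cc (k : 'I_6) := nth false [:: c1; c1; c2; c2; c3; c3] k.
have hp : forall k n, zc D 1 (V k n) (1 + (if cc k then piu D else 0)).
  by move=> [[|[|[|[|[|[|k]]]]]] hk] //=.
have ih : injective idx.
  move=> k k' /eqP; rewrite /idx nth_uniq //=; first by move/eqP/val_inj.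
apply: (@assemble D m s a idx r V l HD om m3 ih).
- by move=> [[|[|[|[|[|[|k]]]]]] hk].
- by move=> k; apply: zu_cong (zcong_sym (hp k 3)) (zu_c _ HD).
- by move=> [[|[|[|[|[|[|k]]]]]] hk].
- by move=> [[|[|[|[|[|[|k]]]]]] hk].
- exact: zcong_trans (hp o0 3) (zcong_sym (hp o1 3)).
- exact: zcong_trans (hp o2 3) (zcong_sym (hp o3 3)).
- exact: zcong_trans (hp o4 3) (zcong_sym (hp o5 3)).
Qed.

Lemma pair3 (c : 'I_7 -> bool) (x y z : 'I_7) :
  exists p q w, c p = c q /\ perm_eq [:: p; q; w] [:: x; y; z].
Proof.
case Exy: (c x == c y); first by exists x, y, z; split; [apply/eqP|].
case Exz: (c x == c z).
  exists x, z, y; split; first exact/eqP.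
  apply/permP => P /=; lia.
exists y, z, x; split.
  by move: Exy Exz; case: (c x); case: (c y); case: (c z).
apply/permP => P /=; lia.
Qed.

Definition p7 (k : nat) (h : (k < 7)%N) : 'I_7 := Ordinal h.

Definition e0 := @p7 0 isT. Definition e1 := @p7 1 isT. Definition e2 := @p7 2 isT.
Definition e3 := @p7 3 isT. Definition e4 := @p7 4 isT. Definition e5 := @p7 5 isT.
Definition e6 := @p7 6 isT.

Lemma pairs7 (c : 'I_7 -> bool) : exists p1 q1 p2 q2 p3 q3 : 'I_7,
  uniq [:: p1; q1; p2; q2; p3; q3] /\ c p1 = c q1 /\ c p2 = c q2 /\ c p3 = c q3.
Proof.
have [p1 [q1 [w1 [f1 h1]]]] := pair3 c e0 e1 e2.
have [p2 [q2 [w2 [f2 h2]]]] := pair3 c w1 e3 e4.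
have [p3 [q3 [w3 [f3 h3]]]] := pair3 c w2 e5 e6.
exists p1, q1, p2, q2, p3, q3; split => //.
have P : perm_eq [:: p1; q1; p2; q2; p3; q3; w3] [:: e0; e1; e2; e3; e4; e5; e6].
  apply: (@perm_trans _ ([:: p1; q1] ++ [:: p2; q2] ++ [:: w2; e5; e6])).
    exact: (perm_cat (perm_refl [:: p1; q1]) (perm_cat (perm_refl [:: p2; q2]) h3)).
  apply: (@perm_trans _ ([:: p1; q1] ++ [:: w1; e3; e4] ++ [:: e5; e6])).
    exact: (perm_cat (perm_refl [:: p1; q1]) (perm_cat h2 (perm_refl [:: e5; e6]))).
  exact: (perm_cat h1 (perm_refl [:: e3; e4; e5; e6])).
have : uniq [:: p1; q1; p2; q2; p3; q3; w3] by rewrite (perm_uniq P).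
by rewrite -[[:: p1; q1; p2; q2; p3; q3; w3]]/([:: p1; q1; p2; q2; p3; q3] ++ [:: w3]) cat_uniq => /andP [].
Qed.

Theorem lemma9 (D : int) (m s : nat) (a : 'I_s -> Oelt) :
  D \in ramD -> odd m -> (3 <= m)%N ->
  (forall i, Ononzero (a i)) ->
  ((exists (l : nat) (i1 i2 i3 i4 i5 i6 : 'I_s) (c1 c2 c3 : bool),
      uniq [:: i1; i2; i3; i4; i5; i6] /\
      level_coef D (2 * m) (a i1) l c1 /\ level_coef D (2 * m) (a i2) l c1 /\
      level_coef D (2 * m) (a i3) l c2 /\ level_coef D (2 * m) (a i4) l c2 /\
      level_coef D (2 * m) (a i5) l c3 /\ level_coef D (2 * m) (a i6) l c3) ->
    nontriv_zero D (2 * m) a) /\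
  ((exists (l : nat) (j : 'I_7 -> 'I_s),
      injective j /\ forall k, at_level D (2 * m) (a (j k)) l) ->
    nontriv_zero D (2 * m) a).
Proof.
move=> HD om m3 _.
have P1 := @part1 D m s a HD om m3.
split; first exact: P1.
move=> [l [j [ij hj]]].
have [c hc] := fin_all_exists hj.
have [p1 [q1 [p2 [q2 [p3 [q3 [u [f1 [f2 f3]]]]]]]]] := pairs7 c.
apply: P1.
exists l, (j p1), (j q1), (j p2), (j q2), (j p3), (j q3), (c p1), (c p2), (c p3).
split.
  have -> : [:: j p1; j q1; j p2; j q2; j p3; j q3] = map j [:: p1; q1; p2; q2; p3; q3] by [].
  by rewrite (map_inj_uniq ij).
do !split; [exact: hc | rewrite f1; exact: hc | exact: hc | rewrite f2; exact: hc | exact: hc | rewrite f3; exact: hc].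
Qed.
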